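(* Let $(N,+,* )$ be a nilpotent ring with adjoint operation $x\circ y=x+y+x*y$, let $S$ be a subring and $I$ a two-sided ideal of $N$ with $S\cap I=\{0\}$ and $N=S+I$. Then every $x\in N$ can be written uniquely as $x=s\circ i$ with $s\in S$, $i\in I$; define $x\bullet y=s\circ y\circ i$, so that $(N,+,\bullet)$ is a left brace, and let $r$ be its Yang–Baxter map. Let $X\subseteq N$ be such that $(X,r)$ is a solution of the set-theoretic Yang–Baxter equation. Let $J\subseteq I\cap X$ be a two-sided ideal of the ring $N$. Let $f,g:X\to X$ with $f$ $\mathcal G(X,r)$-equivariant, and let $k_1(x)=f(x)*g(x)$, $k_2(x)=f(x)+f(x)*g(x)$, assuming $k_1(X),k_2(X)\subseteq X$. Suppose that $g(x)*z=z*g(x)$ for all $z\in I$, $x\in X$; that $g(x+j)=g(x)$ whenever $x\in X$, $j\in J$ and $x+j\in X$; and that $k_1(x)-x\in J$ and $k_2(x)-x\in J$ for all $x\in X$. Then $k_1$ and $k_2$ are reflections of $(X,r)$.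
   Context: A (left) brace is a triple $(B,+,\circ)$ with $(B,+)$ abelian group, $(B,\circ)$ group, and $x\circ(y+z)=x\circ y+x\circ z-x$. The Yang–Baxter map of the brace $(N,+,\bullet)$ is $r(x,y)=(\sigma_x(y),\tau_y(x))$ with $\sigma_x(y)=x\bullet y-x$ and $\tau_y(x)=(\sigma_x(y))^{-1}\bullet x-(\sigma_x(y))^{-1}$, inverses taken in $(N,\bullet)$. For $X\subseteq N$, $(X,r)$ is a solution of the set-theoretic Yang–Baxter equation if $r(X\times X)\subseteq X\times X$ and $(\mathrm{id}\times r)(r\times\mathrm{id})(\mathrm{id}\times r)=(r\times\mathrm{id})(\mathrm{id}\times r)(r\times\mathrm{id})$ on $X^3$. A map $k:X\to X$ is a reflection of $(X,r)$ if $r(\mathrm{id}\times k)r(\mathrm{id}\times k)=(\mathrm{id}\times k)r(\mathrm{id}\times k)r$ on $X\times X$; $k$ is $\mathcal G(X,r)$-equivariant if $k\sigma_x=\sigma_x k$ on $X$ for every $x\in X$. *)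

(* Defs.v *)
(* (N,+) is a zmodType; the (non-unital) ring multiplication
   is an explicit operation [mul] with its axioms as hypotheses, since
   MathComp rings are unital and a nilpotent ring has no unit. *)
From HB Require Import structures.
From mathcomp Require Import all_boot all_order all_algebra.
From Stdlib Require Import ClassicalEpsilon.
Set Implicit Arguments. Unset Strict Implicit. Unset Printing Implicit Defensive.
Import GRing.Theory.
Local Open Scope ring_scope.

Section Defs.
Variable N : zmodType.
Variable mul : N -> N -> N.

Definition rng_axioms : Prop :=
  (forall x y z, mul (mul x y) z = mul x (mul y z)) /\
  (forall x y z, mul x (y + z) = mul x y + mul x z) /\
  (forall x y z, mul (x + y) z = mul x z + mul y z).

Definition prodl (x : N) (xs : seq N) : N := foldl mul x xs.

(* nilpotent: N^n = 0 for some n >= 1, i.e. all products of n elements vanish *)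
Definition nilpotent_rng : Prop :=
  exists n : nat, (0 < n)%N /\
    forall (x : N) (xs : seq N), size xs = n.-1 -> prodl x xs = 0.

Definition adj (x y : N) : N := x + y + mul x y.

Definition is_subring (S : N -> Prop) : Prop :=
  S 0 /\ (forall x y, S x -> S y -> S (x - y)) /\
  (forall x y, S x -> S y -> S (mul x y)).

Definition is_ideal (I : N -> Prop) : Prop :=
  I 0 /\ (forall x y, I x -> I y -> I (x - y)) /\
  (forall x i, I i -> I (mul x i) /\ I (mul i x)).

Variables S I : N -> Prop.

Definition decomp_spec (x : N) (p : N * N) : Prop :=
  S p.1 /\ I p.2 /\ x = adj p.1 p.2.

(* the (unique, under the hypotheses of the theorem) decomposition x = s o i *)
Definition decomp (x : N) : N * N :=
  epsilon (inhabits (0, 0)) (decomp_spec x).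

Definition bullet (x y : N) : N := adj (adj (decomp x).1 y) (decomp x).2.

Definition binv (x : N) : N :=
  epsilon (inhabits 0) (fun y => bullet x y = 0 /\ bullet y x = 0).

Definition sigma (x y : N) : N := bullet x y - x.
Definition tau (y x : N) : N := bullet (binv (sigma x y)) x - binv (sigma x y).

Definition ybr (x y : N) : N * N := (sigma x y, tau y x).

End Defs.

Definition is_left_brace (N : zmodType) (op : N -> N -> N) : Prop :=
  (exists e : N,
     (forall x, op e x = x /\ op x e = x) /\
     (forall x, exists y, op x y = e /\ op y x = e)) /\
  (forall x y z, op (op x y) z = op x (op y z)) /\
  (forall x y z, op x (y + z) = op x y + op x z - x).

Section YBE.
Variable T : Type.
Variable r : T -> T -> T * T.

Definition r12 (t : T * T * T) : T * T * T :=
  let: (a, b, c) := t in let: (a', b') := r a b in (a', b', c).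
Definition r23 (t : T * T * T) : T * T * T :=
  let: (a, b, c) := t in let: (b', c') := r b c in (a, b', c').

Definition is_solution (X : T -> Prop) : Prop :=
  (forall x y, X x -> X y -> X (r x y).1 /\ X (r x y).2) /\
  (forall x y z, X x -> X y -> X z ->
     r23 (r12 (r23 (x, y, z))) = r12 (r23 (r12 (x, y, z)))).

Definition idk (k : T -> T) (p : T * T) : T * T := (p.1, k p.2).
Definition ru (p : T * T) : T * T := r p.1 p.2.

Definition is_reflection (X : T -> Prop) (k : T -> T) : Prop :=
  forall x y, X x -> X y ->
    ru (idk k (ru (idk k (x, y)))) = idk k (ru (idk k (ru (x, y)))).
End YBE.

Definition equivariant (T : Type) (X : T -> Prop) (sig : T -> T -> T)
  (k : T -> T) : Prop :=
  forall x y, X x -> X y -> k (sig x y) = sig x (k y).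

(* Main.v *)
Require Import Defs.
From mathcomp Require Import all_boot all_order all_algebra.
From Stdlib Require Import ClassicalEpsilon.
Import GRing.Theory.
Local Open Scope ring_scope.
Set Implicit Arguments. Unset Strict Implicit.

Lemma ac_pull_here (N : zmodType) (a t : N) : a + t = a + t. Proof. by []. Qed.
Lemma ac_pull_one (N : zmodType) (t : N) : t = 0 + t. Proof. by rewrite add0r. Qed.
Lemma ac_pull_left (N : zmodType) (a b t e : N) : a = e + t -> a + b = (e + b) + t.
Proof. by move=> ->; rewrite addrAC. Qed.
Lemma ac_step (N : zmodType) (L L' R t : N) : L = L' + t -> L' = R -> L = R + t.
Proof. by move=> -> ->. Qed.
Lemma ac_end (N : zmodType) (L L' t : N) : L = L' + t -> L' = 0 -> L = t.
Proof. by move=> -> ->; rewrite add0r. Qed.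

Ltac ac_pull := first [ apply: ac_pull_here | (eapply ac_pull_left; ac_pull) | apply: ac_pull_one ].
Ltac ac_loop := match goal with
  | |- ?L = ?R + ?t => eapply (@ac_step _ L _ R t); [ac_pull | ac_loop]
  | |- ?L = 0 => rewrite ?add0r ?addr0 //
  | |- ?L = ?t => eapply (@ac_end _ L _ t); [ac_pull | rewrite ?add0r ?addr0 //]
  end.
Ltac acs := rewrite ?addrA; ac_loop.

Section Alg.
Variable N : zmodType.
Variable mul : N -> N -> N.
Hypothesis Hr : rng_axioms mul.

Lemma mulA x y z : mul (mul x y) z = mul x (mul y z).
Proof. by case: Hr. Qed.
Lemma mulDr x y z : mul x (y + z) = mul x y + mul x z.
Proof. by case: Hr => _ []. Qed.
Lemma mulDl x y z : mul (x + y) z = mul x z + mul y z.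
Proof. by case: Hr => _ []. Qed.
Lemma mulx0 x : mul x 0 = 0.
Proof. apply: (addrI (mul x 0)); by rewrite -mulDr !addr0. Qed.
Lemma mul0x x : mul 0 x = 0.
Proof. apply: (addrI (mul 0 x)); by rewrite -mulDl !addr0. Qed.
Lemma mulxN x y : mul x (- y) = - mul x y.
Proof. apply/eqP; rewrite -addr_eq0 -mulDr addNr mulx0 //. Qed.
Lemma mulNx x y : mul (- x) y = - mul x y.
Proof. apply/eqP; rewrite -addr_eq0 -mulDl addNr mul0x //. Qed.
Lemma mulxB x y z : mul x (y - z) = mul x y - mul x z.
Proof. by rewrite mulDr mulxN. Qed.
Lemma mulBx x y z : mul (x - y) z = mul x z - mul y z.
Proof. by rewrite mulDl mulNx. Qed.

Local Notation adj := (adj mul).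

Lemma adjA x y z : adj (adj x y) z = adj x (adj y z).
Proof. rewrite /Defs.adj !mulDl !mulDr mulA. acs. Qed.
Lemma adj0x x : adj 0 x = x.
Proof. by rewrite /Defs.adj mul0x add0r addr0. Qed.
Lemma adjx0 x : adj x 0 = x.
Proof. by rewrite /Defs.adj mulx0 !addr0. Qed.

Fixpoint tin (x : N) (k : nat) : N :=
  match k with 0 => 0 | k'.+1 => - x - mul x (tin x k') end.

Lemma tin_comm x k : mul x (tin x k) = mul (tin x k) x.
Proof.
elim: k => [|k IH] /=; first by rewrite mulx0 mul0x.
by rewrite mulxB mulBx mulxN mulNx mulA IH.
Qed.

Lemma foldl_nseq_mul y a k :
  foldl mul (mul y a) (nseq k y) = mul y (foldl mul a (nseq k y)).
Proof.
elim: k a => [|k IH] a //=. by rewrite mulA IH.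
Qed.

Lemma prodl_S y k : prodl mul y (nseq k.+1 y) = mul y (prodl mul y (nseq k y)).
Proof. by rewrite /prodl /= foldl_nseq_mul. Qed.

Lemma tin_diff x k : tin x k.+1 - tin x k = prodl mul (- x) (nseq k (- x)).
Proof.
elim: k => [|k IH]; first by rewrite /= mulx0 subr0 subr0.
rewrite prodl_S -IH.
have E : tin x k.+2 - tin x k.+1 = (-x - mul x (tin x k.+1)) - (-x - mul x (tin x k)) by [].
rewrite E. move: (tin x k.+1) (tin x k) => a b.
rewrite mulNx mulxB !opprB !opprK -[RHS](addKr x). acs.
Qed.

Variable n : nat.
Hypothesis Hn : forall (x : N) (xs : seq N), size xs = n.-1 -> prodl mul x xs = 0.

Definition inv x := tin x n.-1.

Lemma inv_fix x : inv x = - x - mul x (inv x).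
Proof.
have H := tin_diff x n.-1. rewrite Hn ?size_nseq // in H.
move/eqP: H; rewrite subr_eq0 => /eqP H. by rewrite /inv -{1}H.
Qed.

Lemma adjxV x : adj x (inv x) = 0.
Proof. by rewrite /Defs.adj {1}inv_fix addrA addrN add0r addNr. Qed.
Lemma adjVx x : adj (inv x) x = 0.
Proof. rewrite /Defs.adj -tin_comm (addrC (inv x) x); exact: adjxV. Qed.


Definition closedP (P : N -> Prop) := P 0 /\ (forall a b, P a -> P b -> P (a - b)) /\
  (forall a b, P a -> P b -> P (mul a b)).

Section Clo.
Variable P : N -> Prop.
Hypothesis HP : closedP P.
Lemma P0 : P 0. Proof. by case: HP. Qed.
Lemma PB a b : P a -> P b -> P (a - b). Proof. by case: HP => _ [h _]; apply: h. Qed.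
Lemma PM a b : P a -> P b -> P (mul a b). Proof. by case: HP => _ [_ h]; apply: h. Qed.
Lemma PN a : P a -> P (- a). Proof. by move=> h; rewrite -sub0r; apply: PB => //; apply: P0. Qed.
Lemma PD a b : P a -> P b -> P (a + b).
Proof. by move=> ha hb; rewrite -(opprK b); apply: PB => //; apply: PN. Qed.
Lemma Padj a b : P a -> P b -> P (adj a b).
Proof. by move=> ha hb; rewrite /Defs.adj; apply: PD; [apply: PD|apply: PM]. Qed.
Lemma Ptin a k : P a -> P (tin a k).
Proof.
move=> ha; elim: k => [|k IH] /=; first exact: P0.
by apply: PB; [apply: PN | apply: PM].
Qed.
Lemma Pinv a : P a -> P (inv a). Proof. exact: Ptin. Qed.
End Clo.

Lemma subring_closed S : is_subring mul S -> closedP S. Proof. by []. Qed.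
Lemma ideal_closed I : is_ideal mul I -> closedP I.
Proof. case=> h0 [hB hM]; split=> //; split=> // a b _ hb; exact: (hM a b hb).1. Qed.

Lemma adj_cancel_l a b c : adj a b = adj a c -> b = c.
Proof. by move=> h; rewrite -(adj0x b) -(adj0x c) -(adjVx a) !adjA h. Qed.
Lemma adj_cancel_r a b c : adj b a = adj c a -> b = c.
Proof. by move=> h; rewrite -(adjx0 b) -(adjx0 c) -(adjxV a) -!adjA h. Qed.

Variables S I : N -> Prop.
Hypothesis HS : is_subring mul S.
Hypothesis HI : is_ideal mul I.
Hypothesis HSI : forall x, S x -> I x -> x = 0.
Hypothesis Hsum : forall x, exists s i, S s /\ I i /\ x = s + i.

Let CS := subring_closed HS.
Let CI := ideal_closed HI.

Lemma Imul z i : I i -> I (mul z i). Proof. by case: HI => _ [_ h] /(h z) []. Qed.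
Lemma Imulr z i : I i -> I (mul i z). Proof. by case: HI => _ [_ h] /(h z) []. Qed.

Lemma decomp_ex x : exists p, decomp_spec mul S I x p.
Proof.
have [s [i [hs [hi ->]]]] := Hsum x.
exists (s, i + mul (inv s) i); split=> //=; split.
  by apply: (PD CI) => //; apply: Imul.
have H : mul (adj s (inv s)) i = 0 by rewrite adjxV mul0x.
rewrite /Defs.adj !mulDl in H.
rewrite /Defs.adj !mulDr -mulA.
transitivity (s + i + (mul s i + mul (inv s) i + mul (mul s (inv s)) i)); first by rewrite H addr0.
acs.
Qed.

Lemma decomp_uniq x p q : decomp_spec mul S I x p -> decomp_spec mul S I x q -> p = q.
Proof.
case: p => s i; case: q => s' i' [/= hs [hi ex]] [/= hs' [hi' ex']].
have E : adj s i = adj s' i' by rewrite -ex -ex'.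
have ha : adj (inv s') s = adj i' (inv i).
  have := congr1 (fun t => adj (inv s') (adj t (inv i))) E => /=.
  by rewrite !adjA adjxV adjx0 -(adjA (inv s')) adjVx adj0x.
have a0 : adj (inv s') s = 0.
  apply: HSI; first by apply: (Padj CS) => //; apply: (Pinv CS).
  by rewrite ha; apply: (Padj CI) => //; apply: (Pinv CI).
have ess : s = s'.
  by rewrite -(adj0x s) -(adjxV s') adjA a0 adjx0.
subst s'; congr (_, _); exact: (@adj_cancel_l s).
Qed.

Lemma decompE x p : decomp_spec mul S I x p -> decomp mul S I x = p.
Proof.
move=> hp; apply: (@decomp_uniq x) => //.
rewrite /decomp; apply: epsilon_spec; exact: decomp_ex.
Qed.

Lemma decomp_spec_decomp x : decomp_spec mul S I x (decomp mul S I x).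
Proof. rewrite /decomp; apply: epsilon_spec; exact: decomp_ex. Qed.

Local Notation bullet := (bullet mul S I).

Lemma bulletE x s i y : S s -> I i -> x = adj s i -> bullet x y = adj (adj s y) i.
Proof. by move=> hs hi ex; rewrite /Defs.bullet (@decompE x (s, i)). Qed.

Lemma bullet_lin s i w : adj (adj s w) i = adj s i + (w + mul s w + mul w i + mul (mul s w) i).
Proof. rewrite /Defs.adj !mulDl. acs. Qed.

Lemma brace : is_left_brace bullet.
Proof.
have d := decomp_spec_decomp.
have S0 : S 0 := P0 CS. have I0 : I 0 := P0 CI.
split; [|split].
- exists 0; split.
    move=> x; have [hs [hi ex]] := d x; split.
      by rewrite (@bulletE 0 0 0 x) // ?adj0x ?adjx0.
    by rewrite (@bulletE x _ _ 0 hs hi ex) adjx0.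
  move=> x; have [hs [hi ex]] := d x.
  set s := (decomp mul S I x).1 in hs hi ex *; set i := (decomp mul S I x).2 in hi ex *.
  exists (adj (inv s) (inv i)); split.
    by rewrite (bulletE _ hs hi ex) -adjA adjxV adj0x adjVx.
  rewrite (@bulletE _ (inv s) (inv i)) //; last 2 first.
  + exact: (Pinv CS). + exact: (Pinv CI).
  by rewrite ex -adjA adjVx adj0x adjxV.
- move=> x y z.
  have [hs [hi ex]] := d x; have [hs' [hi' ey]] := d y.
  have Hxy : bullet x y = adj (adj (decomp mul S I x).1 (decomp mul S I y).1)
                      (adj (decomp mul S I y).2 (decomp mul S I x).2).
    by rewrite (bulletE _ hs hi ex) {1}ey !adjA.
  rewrite (bulletE _ (Padj CS hs hs') (Padj CI hi' hi) Hxy).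
  by rewrite (bulletE _ hs' hi' ey) (bulletE _ hs hi ex) !adjA.
- move=> x y z; have [hs [hi ex]] := d x.
  rewrite !(bulletE _ hs hi ex) !bullet_lin -ex.
  have -> : forall a b c : N, (a + b) + (a + c) - a = a + (b + c).
    by move=> a b c; rewrite [a + c]addrC addrA addrK addrA.
  congr (_ + _); rewrite !mulDr !mulDl ?mulDr. acs.
Qed.

Lemma bullet_assoc x y z : bullet (bullet x y) z = bullet x (bullet y z).
Proof. by have [_ [h _]] := brace. Qed.

Lemma bullet_x0 x : bullet x 0 = x.
Proof.
have [hs [hi ex]] := decomp_spec_decomp x.
by rewrite (bulletE _ hs hi ex) adjx0.
Qed.

Lemma bulletI u y : I u -> bullet u y = adj y u.
Proof. move=> hu; rewrite (@bulletE u 0 u) ?adj0x //; exact: (P0 CS). Qed.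

Lemma binvI u : I u -> binv mul S I u = inv u.
Proof.
move=> hu; have hv : I (inv u) := Pinv CI hu.
have e1 : bullet u (inv u) = 0 by rewrite bulletI // adjVx.
have e2 : bullet (inv u) u = 0 by rewrite bulletI // adjxV.
have [h1 h2] : bullet u (binv mul S I u) = 0 /\ bullet (binv mul S I u) u = 0.
  exact: (epsilon_spec (inhabits 0) (fun y => bullet u y = 0 /\ bullet y u = 0) (ex_intro _ (inv u) (conj e1 e2))).
rewrite -(bullet_x0 (binv mul S I u)) -e1 -bullet_assoc h2.
by rewrite bulletI ?adjx0 //; exact: (P0 CI).
Qed.

Definition Rm (w z : N) := z + mul z w.

Lemma sigmaI x y : I x -> sigma mul S I x y = Rm x y.
Proof. by move=> hx; rewrite /sigma bulletI // /Defs.adj addrAC addrK. Qed.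

Lemma ybrI x y : I x -> I y -> ybr mul S I x y = (Rm x y, Rm (inv (Rm x y)) x).
Proof.
move=> hx hy; rewrite /ybr /tau sigmaI //.
have hu : I (Rm x y) by apply: (PD CI) => //; apply: Imulr.
rewrite binvI // bulletI; last exact: (Pinv CI).
by rewrite /Defs.adj addrAC addrK.
Qed.

Lemma Rm_adj w v z : Rm w (Rm v z) = Rm (adj v w) z.
Proof. rewrite /Rm /Defs.adj !mulDl !mulDr mulA. acs. Qed.
Lemma Rm0 z : Rm 0 z = z.
Proof. by rewrite /Rm mulx0 addr0. Qed.
Lemma RmK a z : Rm (inv a) (Rm a z) = z.
Proof. by rewrite Rm_adj adjxV Rm0. Qed.
Lemma RmVK a z : Rm a (Rm (inv a) z) = z.
Proof. by rewrite Rm_adj adjVx Rm0. Qed.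

Lemma refl_gen (X : N -> Prop) k :
  (forall x, X x -> I x) -> (forall x y, X x -> X y -> X (Rm x y)) ->
  (forall x, X x -> X (inv x)) -> (forall x, X x -> X (k x)) ->
  (forall x y, X x -> X y -> k (Rm x y) = Rm x (k y)) ->
  is_reflection (ybr mul S I) X k.
Proof.
move=> XI XR XV Xk Ek x y hx hy.
rewrite /ru /idk; cbn [fst snd].
rewrite (ybrI (XI _ hx) (XI _ (Xk _ hy))); cbn [fst snd].
set a := Rm x (k y).
have ha : X a := XR _ _ hx (Xk _ hy).
rewrite (Ek _ _ (XV _ ha) hx).
rewrite (ybrI (XI _ ha) (XI _ (XR _ _ (XV _ ha) (Xk _ hx)))); cbn [fst snd]; rewrite RmVK.
rewrite (ybrI (XI _ hx) (XI _ hy)); cbn [fst snd].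
set c := Rm x y.
have hc : X c := XR _ _ hx hy.
rewrite (Ek _ _ (XV _ hc) hx).
rewrite (ybrI (XI _ hc) (XI _ (XR _ _ (XV _ hc) (Xk _ hx)))); cbn [fst snd]; rewrite RmVK.
by rewrite (Ek _ _ (XV _ (Xk _ hx)) hc) /c (Ek _ _ hx hy).
Qed.

End Alg.

Theorem mainTheorem8 (N : zmodType) (mul : N -> N -> N)
  (S I X J : N -> Prop) (f g : N -> N) :
  rng_axioms mul -> nilpotent_rng mul ->
  is_subring mul S -> is_ideal mul I ->
  (forall x, S x -> I x -> x = 0) ->
  (forall x, exists s i, S s /\ I i /\ x = s + i) ->
  is_solution (ybr mul S I) X ->
  is_ideal mul J -> (forall j, J j -> I j /\ X j) ->
  (forall x, X x -> X (f x)) -> (forall x, X x -> X (g x)) ->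
  equivariant X (sigma mul S I) f ->
  (forall x, X x -> X (mul (f x) (g x))) ->
  (forall x, X x -> X (f x + mul (f x) (g x))) ->
  (forall x z, X x -> I z -> mul (g x) z = mul z (g x)) ->
  (forall x j, X x -> J j -> X (x + j) -> g (x + j) = g x) ->
  (forall x, X x -> J (mul (f x) (g x) - x)) ->
  (forall x, X x -> J (f x + mul (f x) (g x) - x)) ->
  (forall x, exists! p, decomp_spec mul S I x p) /\
  is_left_brace (bullet mul S I) /\
  is_reflection (ybr mul S I) X (fun x => mul (f x) (g x)) /\
  is_reflection (ybr mul S I) X (fun x => f x + mul (f x) (g x)).
Proof.
move=> Hr [n [_ Hn]] HS HI HSI Hsum Hsol HJ HJIX Xf Xg Eqf Xk1 Xk2 Hcomm Hg J1 J2.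
have CJ := ideal_closed HJ.
have CI := ideal_closed HI.
have Jmr : forall z i, J i -> J (mul i z) by move=> z i; case: HJ => _ [_ h] /(h z) [].
have XJ : forall x, X x -> J x.
  move=> x hx.
  have jf : J (f x).
    have -> : f x = (f x + mul (f x) (g x) - x) - (mul (f x) (g x) - x).
      by rewrite opprB addrA addrNK addrK.
    exact: (PB CJ (J2 x hx) (J1 x hx)).
  have -> : x = mul (f x) (g x) - (mul (f x) (g x) - x) by rewrite opprB addrC addrNK.
  exact: (PB CJ (Jmr _ _ jf) (J1 x hx)).
have XI : forall x, X x -> I x by move=> x /XJ /HJIX [].
have JX : forall x, J x -> X x by move=> x /HJIX [].
have XR : forall x y, X x -> X y -> X (Rm mul x y).
  move=> x y hx hy; apply: JX; apply: (PD CJ); [exact: XJ | exact/Jmr/XJ].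
have XV : forall x, X x -> X (inv mul n x).
  by move=> x hx; apply: JX; apply: (Pinv n CJ); exact: XJ.
have Ef : forall x y, X x -> X y -> f (Rm mul x y) = Rm mul x (f y).
  move=> x y hx hy; have := Eqf x y hx hy.
  by rewrite !(sigmaI Hr Hn HS HI HSI Hsum _ (XI _ hx)).
have Eg : forall x y, X x -> X y -> g (Rm mul x y) = g y.
  move=> x y hx hy; rewrite /Rm Hg //; first exact/Jmr/XJ.
  exact: XR.
have E1 : forall x y, X x -> X y ->
    mul (f (Rm mul x y)) (g (Rm mul x y)) = Rm mul x (mul (f y) (g y)).
  move=> x y hx hy; rewrite Ef // Eg // /Rm (mulDl Hr) (mulA Hr).
  by rewrite -(Hcomm y x hy (XI _ hx)) -(mulA Hr).
split.
  move=> x; have [p hp] := decomp_ex Hr Hn HI Hsum x.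
  exists p; split=> // q hq; exact: (decomp_uniq Hr Hn HS HI HSI hp hq).
split; first exact: (brace Hr Hn HS HI HSI Hsum).
split.
  apply: (refl_gen Hr Hn HS HI HSI Hsum XI XR XV Xk1) => x y hx hy.
  exact: E1.
apply: (refl_gen Hr Hn HS HI HSI Hsum XI XR XV Xk2) => x y hx hy.
rewrite E1 // Ef // /Rm (mulDl Hr). acs.
Qed.
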